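(* Let $\mathbb{F}$ be a field and let $n,k$ be integers with $n>k>1$. Let $l$ be a positive integer such that $l<2^{n-k}$ and the binary decomposition of $l$ contains at most $k$ digits equal to $1$. Then there exists a unital $\mathbb{F}$-algebra $\mathcal{A}$ with $\dim\mathcal{A}=n$ and $l(\mathcal{A})=l$.
   Context: All algebras are finite-dimensional, unital, not necessarily associative algebras over the field $\mathbb{F}$. For a finite generating set $S$ of an algebra $\mathcal{A}$, a word in $S$ is any product (with any bracketing) of finitely many elements of $S$; its length is the number of factors, and $1$ is a word of length $0$. $L_i(S)$ is the linear span of all words in $S$ of length at most $i$. The length of $S$ is $l(S)=\min\{k\ge0: L_k(S)=\mathcal{A}\}$, and $l(\mathcal{A})=\max\{l(S): S\text{ a finite generating set of }\mathcal{A}\}$. *)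

(* Defs.v *)
From HB Require Import structures.
From mathcomp Require Import all_boot all_order all_algebra.
Set Implicit Arguments. Unset Strict Implicit. Unset Printing Implicit Defensive.
Import GRing.Theory.
Local Open Scope ring_scope.

(* An n-dimensional (not necessarily associative) F-algebra is modelled on the
   F-vector space 'rV[F]_n with a multiplication mul and a candidate unit one. *)

Definition bilinear_mul (F : fieldType) (n : nat)
    (mul : 'rV[F]_n -> 'rV[F]_n -> 'rV[F]_n) : Prop :=
  (forall (a : F) x y z, mul (a *: x + y) z = a *: mul x z + mul y z) /\
  (forall (a : F) x y z, mul x (a *: y + z) = a *: mul x y + mul x z).

Definition unital_mul (F : fieldType) (n : nat)
    (mul : 'rV[F]_n -> 'rV[F]_n -> 'rV[F]_n) (one : 'rV[F]_n) : Prop :=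
  forall x, mul one x = x /\ mul x one = x.

Inductive word (T : Type) : Type :=
  | WLeaf of T
  | WMul of word T & word T.

Fixpoint wlen T (w : word T) : nat :=
  match w with WLeaf _ => 1%N | WMul u v => (wlen u + wlen v)%N end.

Fixpoint wleaves T (w : word T) : seq T :=
  match w with WLeaf x => [:: x] | WMul u v => wleaves u ++ wleaves v end.

Fixpoint weval T (mul : T -> T -> T) (w : word T) : T :=
  match w with WLeaf x => x | WMul u v => mul (weval mul u) (weval mul v) end.

(* v is a word in S of length at most i (1 is the word of length 0). *)
Definition is_word_le (F : fieldType) (n : nat)
    (mul : 'rV[F]_n -> 'rV[F]_n -> 'rV[F]_n) (one : 'rV[F]_n)
    (S : seq 'rV[F]_n) (i : nat) (v : 'rV[F]_n) : Prop :=
  v = one \/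
  exists w : word 'rV[F]_n,
    all (fun x => x \in S) (wleaves w) /\ (wlen w <= i)%N /\ v = weval mul w.

Definition in_span (F : fieldType) (n : nat) (P : 'rV[F]_n -> Prop)
    (v : 'rV[F]_n) : Prop :=
  exists (m : nat) (u : 'I_m -> 'rV[F]_n) (c : 'I_m -> F),
    (forall j, P (u j)) /\ v = \sum_(j < m) c j *: u j.

Definition L_full (F : fieldType) (n : nat)
    (mul : 'rV[F]_n -> 'rV[F]_n -> 'rV[F]_n) (one : 'rV[F]_n)
    (S : seq 'rV[F]_n) (i : nat) : Prop :=
  forall v, in_span (is_word_le mul one S i) v.

Definition generating (F : fieldType) (n : nat)
    (mul : 'rV[F]_n -> 'rV[F]_n -> 'rV[F]_n) (one : 'rV[F]_n)
    (S : seq 'rV[F]_n) : Prop :=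
  exists i, L_full mul one S i.

Definition set_length (F : fieldType) (n : nat)
    (mul : 'rV[F]_n -> 'rV[F]_n -> 'rV[F]_n) (one : 'rV[F]_n)
    (S : seq 'rV[F]_n) (k : nat) : Prop :=
  L_full mul one S k /\ forall j, (j < k)%N -> ~ L_full mul one S j.

Definition alg_length (F : fieldType) (n : nat)
    (mul : 'rV[F]_n -> 'rV[F]_n -> 'rV[F]_n) (one : 'rV[F]_n) (l : nat) : Prop :=
  (exists S, generating mul one S /\ set_length mul one S l) /\
  (forall S k, set_length mul one S k -> (k <= l)%N).

Definition binary_ones (l : nat) : nat :=
  (\sum_(i < l.+1) odd (l %/ 2 ^ i))%N.

(* Main.v *)
Require Import Defs.
From HB Require Import structures.
From mathcomp Require Import all_boot all_order all_algebra.
From mathcomp Require Import ring zify.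
Set Implicit Arguments. Unset Strict Implicit. Unset Printing Implicit Defensive.
Import GRing.Theory.
Local Open Scope ring_scope.

Section Span.
Variables (F : fieldType) (n : nat).
Implicit Types (P Q R : 'rV[F]_n -> Prop).

Inductive lspan P : 'rV[F]_n -> Prop :=
| span0 : lspan P 0
| spanP x : P x -> lspan P x
| spanD x y : lspan P x -> lspan P y -> lspan P (x + y)
| spanZ a x : lspan P x -> lspan P (a *: x).

Lemma spanN P x : lspan P x -> lspan P (- x).
Proof. by move=> h; rewrite -scaleN1r; apply: spanZ. Qed.

Lemma spanB P x y : lspan P x -> lspan P y -> lspan P (x - y).
Proof. by move=> h1 h2; apply: spanD => //; apply: spanN. Qed.

Lemma span_mono P Q : (forall x, P x -> Q x) -> forall x, lspan P x -> lspan Q x.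
Proof.
move=> hPQ x; elim=> [|y /hPQ|y z _ h1 _ h2|a y _ h]; try by constructor.

Qed.

Lemma span_idem P x : lspan (lspan P) x -> lspan P x.
Proof. elim=> //; [exact: span0| move=> *; exact: spanD| move=> *; exact: spanZ]. Qed.

Lemma span_sub P Q : (forall x, P x -> lspan Q x) -> forall x, lspan P x -> lspan Q x.
Proof. by move=> h x hx; apply: span_idem; apply: span_mono hx. Qed.

Lemma span_in_span P v : lspan P v <-> in_span P v.
Proof.
split.
  elim=> [|x Px|x y _ [m1 [u1 [c1 [h1 ->]]]] _ [m2 [u2 [c2 [h2 ->]]]]|a x _ [m [u [c0 [h ->]]]]].
  - by exists 0%N, (fun _ => 0), (fun _ => 0); split; [by case|by rewrite big_ord0].
  - exists 1%N, (fun _ => x), (fun _ => 1); split=> //; by rewrite big_ord1 scale1r.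
  - exists (m1 + m2)%N, (fun j => match split j with inl a => u1 a | inr b => u2 b end),
      (fun j => match split j with inl a => c1 a | inr b => c2 b end); split.
      by move=> j; case: (split j).
    rewrite big_split_ord /=; congr (_ + _); apply: eq_bigr => i _.
      by rewrite -[lshift _ _]/(unsplit (inl i)) unsplitK.
    by rewrite -[rshift _ _]/(unsplit (inr i)) unsplitK.
  - exists m, u, (fun j => a * c0 j); split=> //.
    by rewrite scaler_sumr; apply: eq_bigr => j _; rewrite scalerA.
case=> m [u [c0 [h ->]]].
elim/big_ind: _ => [|x y|j _]; [exact: span0|exact: spanD|].
by apply: spanZ; apply: spanP.
Qed.

Lemma span_lin P (f : 'rV[F]_n -> F) :
  (forall a x y, f (a *: x + y) = a * f x + f y) ->
  (forall x, P x -> f x = 0) -> forall x, lspan P x -> f x = 0.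
Proof.
move=> lin h0.
have f0 : f 0 = 0.
  have := lin 1 0 0; rewrite scaler0 addr0 mul1r => /eqP. idtac.
  move=> /eqP h; rewrite -[RHS](subrr (f 0)) {2}h; by rewrite addrK.
move=> x; elim=> // [y z _ h1 _ h2|a y _ h].
  by have := lin 1 y z; rewrite scale1r mul1r h1 h2 addr0.
by have := lin a y 0; rewrite addr0 f0 addr0 h mulr0.
Qed.

Lemma span_bil P Q R (mul : 'rV[F]_n -> 'rV[F]_n -> 'rV[F]_n) :
  bilinear_mul mul ->
  (forall x y, P x -> Q y -> lspan R (mul x y)) ->
  forall x y, lspan P x -> lspan Q y -> lspan R (mul x y).
Proof.
move=> [bl br] h.
have m0l y : mul 0 y = 0.
  have h1 := bl 1 0 0 y; rewrite scale1r addr0 scale1r in h1.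
  have : mul 0 y + 0 = mul 0 y + mul 0 y by rewrite addr0 {1}h1.
  by move/addrI <-.
have m0r x : mul x 0 = 0.
  have h1 := br 1 x 0 0; rewrite scale1r addr0 scale1r in h1.
  have : mul x 0 + 0 = mul x 0 + mul x 0 by rewrite addr0 {1}h1.
  by move/addrI <-.
move=> x y hx; elim: hx y => [|x0 Px|x1 x2 _ h1 _ h2|a x0 _ h0] y hy.
- by rewrite m0l; apply: span0.
- elim: hy => [|y0 Qy|y1 y2 _ h1 _ h2|a y0 _ h0].
  + by rewrite m0r; apply: span0.
  + exact: h.
  + by have := br 1 x0 y1 y2; rewrite !scale1r => ->; apply: spanD.
  + by have := br a x0 y0 0; rewrite !addr0 m0r addr0 => ->; apply: spanZ.
- by have := bl 1 x1 x2 y; rewrite !scale1r => ->; apply: spanD; auto.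
- by have := bl a x0 0 y; rewrite !addr0 m0l addr0 => ->; apply: spanZ; auto.
Qed.

End Span.

Section Alg.
Variables (F : fieldType) (N c : nat) (dbl : nat -> bool).
Hypotheses (cN : (c <= N)%N) (c0 : (0 < c)%N).
Local Notation V := 'rV[F]_N.+1.

Definition crd (x : V) (i : nat) : F := x 0 (inord i).
Definition ev (i : nat) : V := delta_mx 0 (inord i).
Definition qq (i : nat) : nat := if dbl i then i.-1 else 1%N.
Definition SP (x y : V) : V :=
  \sum_(2 <= i < c.+1) (crd x i.-1 * crd y (qq i)) *: ev i.
Definition amul (x y : V) : V :=
  crd x 0 *: y + crd y 0 *: x - (crd x 0 * crd y 0) *: ev 0 + SP x y.

Lemma crdD x y i : crd (x + y) i = crd x i + crd y i.
Proof. by rewrite /crd mxE. Qed.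
Lemma crdZ a x i : crd (a *: x) i = a * crd x i.
Proof. by rewrite /crd mxE. Qed.
Lemma crdN x i : crd (- x) i = - crd x i.
Proof. by rewrite /crd mxE. Qed.
Lemma crdB x y i : crd (x - y) i = crd x i - crd y i.
Proof. by rewrite crdD crdN. Qed.
Lemma crd0 i : crd 0 i = 0.
Proof. by rewrite /crd mxE. Qed.
Lemma crd_sum I (r : seq I) (P : pred I) (E : I -> V) j :
  crd (\sum_(i <- r | P i) E i) j = \sum_(i <- r | P i) crd (E i) j.
Proof. by rewrite /crd summxE. Qed.
Lemma crd_ev i j : (i <= N)%N -> (j <= N)%N -> crd (ev i) j = (i == j)%:R.
Proof.
move=> iN jN; rewrite /crd /ev mxE eqxx /=.
by rewrite -(inj_eq val_inj) /= !inordK // eq_sym.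
Qed.

Lemma crd_SP x y j : (j <= N)%N ->
  crd (SP x y) j = if (2 <= j <= c)%N then crd x j.-1 * crd y (qq j) else 0.
Proof.
move=> jN; rewrite /SP crd_sum.
case: ifP => hj.
  rewrite (bigD1_seq j) ?mem_index_iota ?iota_uniq //=.
  rewrite crdZ crd_ev // eqxx mulr1 big1_seq ?addr0 // => i /andP [ij].
  rewrite mem_index_iota => hi; rewrite crdZ crd_ev; last by []; last by lia.
  by rewrite (negbTE ij) mulr0.
rewrite big1_seq // => i /andP [_]; rewrite mem_index_iota => hi.
rewrite crdZ crd_ev //; last by lia.
have -> : (i == j) = false by apply/eqP => ij; subst; rewrite hi in hj.
by rewrite mulr0.
Qed.

Lemma crd_mulA x y j : (j <= N)%N ->
  crd (amul x y) j = crd x 0 * crd y j + crd y 0 * crd x j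
    - crd x 0 * crd y 0 * (0%N == j)%:R
    + (if (2 <= j <= c)%N then crd x j.-1 * crd y (qq j) else 0).
Proof.
by move=> jN; rewrite /amul !(crdD, crdN, crdZ) crd_ev // crd_SP // mulrN.
Qed.

Lemma crd_lin i a x y : crd (a *: x + y) i = a * crd x i + crd y i.
Proof. by rewrite crdD crdZ. Qed.

Lemma SP_linl a x y z : SP (a *: x + y) z = a *: SP x z + SP y z.
Proof.
rewrite /SP scaler_sumr -big_split; apply: eq_bigr => i _.
by rewrite /= crd_lin scalerA -scalerDl; congr (_ *: _); ring.
Qed.

Lemma SP_linr a x y z : SP x (a *: y + z) = a *: SP x y + SP x z.
Proof.
rewrite /SP scaler_sumr -big_split; apply: eq_bigr => i _.
by rewrite /= crd_lin scalerA -scalerDl; congr (_ *: _); ring.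
Qed.

Lemma amul_bil : bilinear_mul amul.
Proof.
split=> a x y z; rewrite /amul ?SP_linl ?SP_linr !crd_lin;
  apply/rowP => j; rewrite !mxE; ring.
Qed.

Lemma crd_one i : (i <= N)%N -> crd (ev 0) i = (i == 0%N)%:R.
Proof. by move=> iN; rewrite crd_ev // eq_sym. Qed.

Lemma SP_onel x : SP (ev 0) x = 0.
Proof.
rewrite /SP big1_seq // => i /andP [_]; rewrite mem_index_iota => hi.
by rewrite crd_one; [rewrite (_ : (i.-1 == 0)%N = false) ?mul0r ?scale0r //|]; lia.
Qed.

Lemma SP_oner x : SP x (ev 0) = 0.
Proof.
rewrite /SP big1_seq // => i /andP [_]; rewrite mem_index_iota => hi.
rewrite crd_one /qq; last by case: (dbl i); lia.
by rewrite (_ : ((if dbl i then i.-1 else 1) == 0)%N = false) ?mulr0 ?scale0r //; case: (dbl i); lia.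
Qed.

Lemma amul_unital : unital_mul amul (ev 0).
Proof.
move=> x; rewrite /amul SP_onel SP_oner crd_one // eqxx.
split; apply/rowP => j; rewrite !mxE /=; ring.
Qed.

Fixpoint cw T (x : T) (i : nat) : word T :=
  match i with
  | 0 => WLeaf x
  | i'.+1 => if i' == 0%N then WLeaf x
             else WMul (cw x i') (if dbl i'.+1 then cw x i' else WLeaf x)
  end.

Definition w i := wlen (cw tt i).

Lemma wlen_cw T (x : T) i : wlen (cw x i) = w i.
Proof.
rewrite /w; elim: i => //= i IH; case: eqP => // _ /=.
by case: (dbl i.+1); rewrite /= ?IH.
Qed.

Lemma w_step i : (1 <= i)%N -> w i.+1 = (w i + w (qq i.+1))%N.
Proof.
move=> hi; rewrite /w /= /qq; case: eqP => [|_]; first by lia.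
by case: (dbl i.+1).
Qed.

Lemma w1 : w 1 = 1%N. Proof. by []. Qed.
Lemma w0 : w 0 = 1%N. Proof. by []. Qed.

Lemma w_pos i : (1 <= w i)%N.
Proof.
case: i => [|i]; first by [].
elim: i => [|i IH]; first by [].
by rewrite w_step //; lia.
Qed.

Lemma w_succ j : (w j <= w j.+1)%N.
Proof.
case: (posnP j) => [->|h]; first by [].
by rewrite w_step //; lia.
Qed.

Lemma w_mono i j : (i <= j)%N -> (w i <= w j)%N.
Proof.
elim: j => [|j IH]; first by rewrite leqn0 => /eqP ->.
rewrite leq_eqVlt => /orP [/eqP ->//|h].
exact: leq_trans (IH h) (w_succ j).
Qed.

Lemma crd_mulA0 x y j : (j <= N)%N -> crd x 0 = 0 -> crd y 0 = 0 ->
  crd (amul x y) j = if (2 <= j <= c)%N then crd x j.-1 * crd y (qq j) else 0.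
Proof. by move=> jN hx hy; rewrite crd_mulA // hx hy !mul0r oppr0 !add0r. Qed.

Lemma lead v : crd v 0 = 0 -> forall i, (1 <= i <= c)%N ->
  [/\ crd (weval amul (cw v i)) i = crd v 1 ^+ w i,
      forall j, (j < i)%N -> crd (weval amul (cw v i)) j = 0 &
      (2 <= i)%N -> forall j, (c < j <= N)%N -> crd (weval amul (cw v i)) j = 0].
Proof.
move=> v0; elim=> [|i IH]; first by [].
case: (posnP i) => [->|ipos] hi.
  split=> //=.  by case.
have [IHa IHb IHc] := IH (ltac:(lia)).
set X := weval amul (cw v i).
have hY : let Y := weval amul (if dbl i.+1 then cw v i else WLeaf v) in
    crd Y (qq i.+1) = crd v 1 ^+ w (qq i.+1) /\ crd Y 0 = 0.
  rewrite /qq; case: (dbl i.+1) => /=; first by split=> //; apply: IHb.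
  by rewrite w1 expr1.
move: hY => /= [hY1 hY0].
have X0 : crd X 0 = 0 by apply: IHb.
have -> : weval amul (cw v i.+1) =
   amul X (weval amul (if dbl i.+1 then cw v i else WLeaf v)).
  by rewrite /= (_ : (i == 0%N) = false) //; last by lia.
split.
- rewrite crd_mulA0 //; last by lia.
  rewrite ifT; last by lia.
  by rewrite /= IHa hY1 -exprD w_step.
- move=> j ji; rewrite crd_mulA0 //; last by lia.
  case: ifP => // hj; rewrite IHb ?mul0r //; lia.
- move=> _ j hj; rewrite crd_mulA0 //; last by lia.
  by rewrite ifF //; lia.
Qed.

Definition hom t (x : V) := forall j, (j <= N)%N -> crd x j != 0 ->
  ((1 <= j <= c)%N && (w j == t)) || ((c < j)%N && (t == 1%N)).

Lemma hom0 t x : hom t x -> crd x 0 = 0.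
Proof. by move=> h; apply/eqP; apply: contraT => /(h 0%N (leq0n _)). Qed.

Lemma hom_mul a b x y : hom a x -> hom b y -> hom (a + b) (amul x y).
Proof.
move=> hx hy j jN; rewrite crd_mulA0 // ?(hom0 hx) ?(hom0 hy) //.
case: ifP => [hj|]; last by rewrite eqxx.
rewrite mulf_eq0 negb_or => /andP [nx ny].
have := hx j.-1 (ltac:(lia)) nx; have := hy (qq j) (ltac:(rewrite /qq; case: (dbl j); lia)) ny.
have qqj : (1 <= qq j <= j.-1)%N by rewrite /qq; case: (dbl j); lia.
have -> : ((c < qq j)%N) = false by lia.
have -> : ((c < j.-1)%N) = false by lia.
rewrite !andFb !orbF => /andP [_ /eqP wb] /andP [_ /eqP wa].
have -> : j = (j.-1).+1 by lia.
rewrite w_step; last by lia.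
rewrite (_ : (j.-1).+1 = j); last by lia.
by rewrite wa wb eqxx andbT; apply/orP; left; lia.
Qed.

Definition Hi t (x : V) := forall j, (j <= N)%N -> (j < t)%N || (c < j)%N -> crd x j = 0.

Lemma crd_ext x y : (forall j, (j <= N)%N -> crd x j = crd y j) -> x = y.
Proof.
move=> h; apply/rowP => j.
by have := h j (ltac:(have := ltn_ord j; lia)); rewrite /crd !inord_val.
Qed.

Section Words.
Variable S : seq V.
Local Notation P := (is_word_le amul (ev 0) S).

Lemma P_mono i j x : (i <= j)%N -> P i x -> P j x.
Proof.
move=> ij [->|[ww [h1 [h2 ->]]]]; first by left.
by right; exists ww; split=> //; split=> //; apply: leq_trans h2 ij.
Qed.

Lemma span_P_mono i j x : (i <= j)%N -> lspan (P i) x -> lspan (P j) x.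
Proof. by move=> ij; apply: span_mono => y; apply: P_mono. Qed.

Lemma gen_mul a b x y : P a x -> P b y -> lspan (P (a + b)) (amul x y).
Proof.
move=> [->|[wx [lx [hx ->]]]] [->|[wy [ly [hy ->]]]].
- by rewrite (proj1 (amul_unital _)); apply: spanP; left.
- rewrite (proj1 (amul_unital _)); apply: spanP; apply: (@P_mono b); first by lia.
  by right; exists wy.
- rewrite (proj2 (amul_unital _)); apply: spanP; apply: (@P_mono a); first by lia.
  by right; exists wx.
- apply: spanP; right; exists (WMul wx wy); split; first by rewrite /= all_cat lx ly.
  by split=> //=; apply: leq_add.
Qed.

Lemma span_mulA a b x y : lspan (P a) x -> lspan (P b) y -> lspan (P (a + b)) (amul x y).
Proof. apply: span_bil; [exact: amul_bil|exact: gen_mul]. Qed.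

Lemma cw_span v : lspan (P 1) v -> forall i, lspan (P (w i)) (weval amul (cw v i)).
Proof.
move=> hv; elim=> [|i IH] //=.
case: eqP => [->|/eqP i0] //=.
rewrite w_step; last by lia.
- rewrite /qq; case: (dbl i.+1) => /=; by apply: span_mulA.
Qed.

Lemma claim (v : V) : crd v 0 = 0 -> crd v 1 != 0 -> lspan (P 1) v ->
  forall x, Hi 2 x -> lspan (P (w c)) x.
Proof.
move=> v0 v1 hv.
have step : forall d, (d <= c.-1)%N -> forall x, Hi (c.+1 - d) x -> lspan (P (w c)) x.
  elim=> [|d IH] hd x hx.
    have -> : x = 0.
      by apply: crd_ext => j jN; rewrite crd0; apply: hx => //; apply/orP; lia.
    exact: span0.
  set t := (c.+1 - d.+1)%N.
  have ht : (2 <= t <= c)%N by rewrite /t; lia.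
  have hd' : (d <= c.-1)%N by lia.
  have e1 : (c.+1 - d = t.+1)%N by rewrite /t; lia.
  have x' : Hi (c.+1 - d) (x - crd x t *: ev t).
    rewrite e1 => j jN hj; rewrite crdB crdZ crd_ev //; last by lia.
    case: (ltngtP j t) => [jt|tj|->].
    - rewrite hx //; last by apply/orP; left; rewrite /t; lia.
      by rewrite mulr0 subr0.
    - rewrite hx //; last by apply/orP; right; lia.
      by rewrite mulr0 subr0.
    - by rewrite mulr1 subrr.
  have et : lspan (P (w c)) (ev t).
    have [La Lb Lc] := lead v0 (ltac:(lia) : (1 <= t <= c)%N).
    set X := weval amul (cw v t) in La Lb Lc *.
    have XL : lspan (P (w c)) X.
      by apply: (span_P_mono (w_mono (ltac:(lia) : (t <= c)%N))); apply: cw_span.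
    have z : Hi (c.+1 - d) (X - crd v 1 ^+ w t *: ev t).
      rewrite e1 => j jN hj; rewrite crdB crdZ crd_ev //; last by lia.
      case: (ltngtP j t) => [jt|tj|->].
      - by rewrite Lb // mulr0 subr0.
      - by rewrite Lc ?mulr0 ?subr0 //; lia.
      - by rewrite La mulr1 subrr.
    have := spanB XL (IH hd' _ z); rewrite opprB addrC addrNK => h.
    have := spanZ (crd v 1 ^+ w t)^-1 h; rewrite scalerA mulVf ?scale1r //.
    by rewrite expf_neq0.
  by rewrite -(subrK (crd x t *: ev t) x); apply: spanD; [apply: IH|apply: spanZ].
move=> x hx; apply: (step c.-1) => //; rewrite (_ : c.+1 - c.-1 = 2)%N //; lia.
Qed.

Definition G := lspan (fun x => x = ev 0 \/ x \in S \/ Hi 2 x).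

Lemma SP_Hi x y : Hi 2 (SP x y).
Proof. by move=> j jN hj; rewrite crd_SP // ifF //; lia. Qed.

Lemma G_mul x y : G x -> G y -> G (amul x y).
Proof.
move=> hx hy; rewrite /amul; apply: spanD; last by apply: spanP; right; right; apply: SP_Hi.
apply: spanB; last by apply: spanZ; apply: spanP; left.
by apply: spanD; apply: spanZ.
Qed.

Lemma G_word ww : all (fun x => x \in S) (wleaves ww) -> G (weval amul ww).
Proof.
elim: ww => [x|u IHu u' IHu'] /=; first by rewrite andbT => h; apply: spanP; right; left.
by rewrite all_cat => /andP [h1 h2]; apply: G_mul; auto.
Qed.

Lemma G_P i x : P i x -> G x.
Proof. by move=> [->|[ww [h1 [_ ->]]]]; [apply: spanP; left|apply: G_word]. Qed.

Lemma upper k : L_full amul (ev 0) S k -> L_full amul (ev 0) S (w c).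
Proof.
move=> hL.
have hG : forall x, G x.
  by move=> x; have /span_in_span := hL x; apply: span_sub => y /G_P.
have [s0 s0S s01] : exists2 s0, s0 \in S & crd s0 1 != 0.
  case: (boolP (has (fun s => crd s 1 != 0) S)) => [/hasP [s hs h]|]; first by exists s.
  move=> /hasPn hn; exfalso.
  have := @span_lin _ _ _ (fun x => crd x 1) _ _ _ (hG (ev 1)).
  rewrite crd_ev ?eqxx ?oner_eq0 //=; [|by lia|by lia].
  move=> h; have /eqP : (1 : F) = 0.
    apply: h; first exact: crd_lin.
    move=> y [->|[yS|yH]].
    - by rewrite crd_one //; lia.
    - by apply/eqP; rewrite -[_ == 0]negbK; apply: hn.
    - by apply: yH => //; lia.
  by rewrite oner_eq0.
set v := s0 - crd s0 0 *: ev 0.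
have hv : lspan (P 1) v.
  apply: spanB; last by apply: spanZ; apply: spanP; left.
  by apply: spanP; right; exists (WLeaf s0); rewrite /= s0S.
have v0 : crd v 0 = 0 by rewrite crdB crdZ crd_one // eqxx mulr1 subrr.
have v1 : crd v 1 != 0.
  by rewrite crdB crdZ crd_one ?mulr0 ?subr0 //; lia.
move=> x; apply/span_in_span; apply: (span_sub _ (hG x)) => y [->|[yS|yH]].
- by apply: spanP; left.
- apply: spanP; right; exists (WLeaf y); split; first by rewrite /= yS.
  by split=> //; exact: w_pos.
- exact: claim v0 v1 hv y yH.
Qed.

End Words.

Definition S0 : seq V := [seq ev j | j <- iota 1 N & (j == 1%N) || (c < j)%N].

Lemma S0_hom x : x \in S0 -> hom 1 x.
Proof.
move/mapP => [j]; rewrite mem_filter mem_iota => /andP [hj hji] -> j' j'N.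
rewrite crd_ev //; last by lia.
have [<- _|ne] := eqVneq j j'; last by rewrite eqxx.
case/orP: hj => [/eqP ->|->]; last by rewrite orbT.
by rewrite w1 eqxx andbT; apply/orP; left; lia.
Qed.

Lemma word_hom ww : all (fun x => x \in S0) (wleaves ww) -> hom (wlen ww) (weval amul ww).
Proof.
elim: ww => [x|u IHu u' IHu'] /=; first by rewrite andbT; apply: S0_hom.
by rewrite all_cat => /andP [h1 h2]; apply: hom_mul; auto.
Qed.

Lemma lower_not t : (t < w c)%N -> ~ L_full amul (ev 0) S0 t.
Proof.
move=> tl hL; have /span_in_span := hL (ev c).
move/(@span_lin _ _ _ (fun x => crd x c)) => h.
have /eqP : (1 : F) = 0; last by rewrite oner_eq0.
rewrite -h; first by rewrite crd_ev ?eqxx.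
  exact: crd_lin.
move=> y [->|[ww [hw [hl ->]]]]; first by rewrite crd_one // gtn_eqF.
apply/eqP; apply: contraT => /(word_hom hw cN).
rewrite ltnn andFb orbF => /andP [_ /eqP hwc].
by move: tl; rewrite hwc ltnNge hl.
Qed.

Lemma lower_full : L_full amul (ev 0) S0 (w c).
Proof.
have e1S : ev 1 \in S0.
  by apply/mapP; exists 1%N => //; rewrite mem_filter eqxx mem_iota /=; lia.
have hv : lspan (is_word_le amul (ev 0) S0 1) (ev 1).
  by apply: spanP; right; exists (WLeaf (ev 1)); rewrite /= e1S.
have v0 : crd (ev 1) 0 = 0 by rewrite crd_ev //; lia.
have v1 : crd (ev 1) 1 != 0 by rewrite crd_ev ?eqxx ?oner_eq0 //; lia.
move=> x; apply/span_in_span; rewrite (row_sum_delta x).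
elim/big_ind: _ => [|y z|j _]; [exact: span0|exact: spanD|apply: spanZ].
have jN : (j <= N)%N by have := ltn_ord j; lia.
have -> : delta_mx 0 j = ev j by rewrite /ev inord_val.
case: (posnP j) => [->|jpos]; first by apply: spanP; left.
case hj : ((nat_of_ord j == 1%N) || (c < j)%N).
  apply: spanP; right; exists (WLeaf (ev j)); split; last by split=> //; exact: w_pos.
  by rewrite /= andbT; apply/mapP; exists (nat_of_ord j) => //; rewrite mem_filter hj mem_iota; lia.
apply: (claim v0 v1 hv) => j' j'N hj'.
rewrite crd_ev //; have [ej|//] := eqVneq (nat_of_ord j) j'; move: hj hj'; rewrite -ej; lia.
Qed.

Lemma alg_len : alg_length amul (ev 0) (w c).
Proof.
split.
  exists S0; split; first by exists (w c); exact: lower_full.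
  by split; [exact: lower_full|move=> j hj; exact: lower_not].
move=> S k [hk hnot]; rewrite leqNgt; apply/negP => lt.
exact: hnot _ lt (upper hk).
Qed.

End Alg.

Local Close Scope ring_scope.

Lemma bo_ext l M : l < M -> binary_ones l = \sum_(i < M) odd (l %/ 2 ^ i).
Proof.
move=> lM; rewrite /binary_ones (big_ord_widen _ (fun i => nat_of_bool (odd (l %/ 2 ^ i))) lM).
rewrite [RHS](bigID (fun i : 'I_M => i < l.+1)) /= [X in _ = _ + X]big1 ?addn0 //.
move=> i; rewrite -leqNgt => hi; rewrite divn_small //.
apply: leq_trans (ltn_expl l (isT : 1 < 2)) _; rewrite leq_exp2l //; exact: ltnW.
Qed.

Lemma bo1 : binary_ones 1 = 1.
Proof. by rewrite /binary_ones !big_ord_recr big_ord0. Qed.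

Lemma bo_even l : 0 < l -> binary_ones l.*2 = binary_ones l.
Proof.
move=> l0; rewrite {1}/binary_ones big_ord_recl /= expn0 divn1 odd_double add0n.
rewrite (bo_ext (M := l.*2)); last by lia.
by apply: eq_bigr => i _; rewrite /= /bump /= add1n expnS divnMA divn2 doubleK.
Qed.

Lemma bo_odd l : binary_ones l.*2.+1 = (binary_ones l).+1.
Proof.
rewrite {1}/binary_ones big_ord_recl /= expn0 divn1 /= odd_double /=.
rewrite (bo_ext (M := l.*2.+1)); last by lia.
rewrite add1n; congr S; apply: eq_bigr => i _.
rewrite /= /bump /= add1n expnS divnMA divn2.
by rewrite -[l.*2.+1]/(true + l.*2) half_bit_double.
Qed.

Lemma cw_ext T (x : T) d1 d2 c : (forall i, i <= c -> d1 i = d2 i) ->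
  forall i, i <= c -> cw d1 x i = cw d2 x i.
Proof.
move=> h; elim=> [|i IH] // hi /=; rewrite IH ?h //; lia.
Qed.

Lemma w_ext d1 d2 c : (forall i, i <= c -> d1 i = d2 i) -> w d1 c = w d2 c.
Proof. by move=> h; rewrite /w (cw_ext tt h). Qed.

Lemma wstep d i : 0 < i -> w d i.+1 = w d i + w d (qq d i.+1).
Proof. exact: (@w_step 1 1). Qed.

Lemma exists_ops l m : 0 < l -> l < 2 ^ m ->
  exists c d, [/\ 0 < c, c.+1 <= m + binary_ones l & w d c = l].
Proof.
elim/ltn_ind: l m => l IH m l0 lm.
case: (leqP l 1) => [l1|l2].
  have -> : l = 1 by lia.
  exists 1, (fun _ => true); split => //; rewrite bo1.
  case: m lm => [|m] //; last by lia.
  by have -> : l = 1 by lia.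
case: m lm => [|m] lm; first by rewrite expn0 in lm; lia.
set l' := l./2.
have hl : l = odd l + l'.*2 by rewrite odd_double_half.
have l'0 : 0 < l' by rewrite /l'; lia.
have l'l : l' < l by rewrite /l'; lia.
have l'm : l' < 2 ^ m by move: lm; rewrite expnS /l'; lia.
have [c [d [c0 cb wc]]] := IH l' l'l m l'0 l'm.
case: (boolP (odd l)) hl => ol hl.
  pose d2 := fun i => if i == c.+1 then true else if i == c.+2 then false else d i.
  exists c.+2, d2; split => //.
    by rewrite hl /= add1n bo_odd; lia.
  rewrite wstep // wstep // /qq /d2 eqxx /= (_ : c.+2 == c.+1 = false); last by lia.
  rewrite eqxx.
  rewrite (@w_ext d2 d c); first by rewrite wc hl (_ : w _ 1 = 1) //; rewrite /nat_of_bool; lia.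
  by move=> i hi; rewrite /d2 !ifF //; lia.
pose d2 := fun i => if i == c.+1 then true else d i.
exists c.+1, d2; split => //.
  by rewrite hl /= add0n bo_even //; lia.
rewrite wstep // /qq /d2 eqxx /=.
rewrite (@w_ext d2 d c); first by rewrite wc hl /nat_of_bool; lia.
by move=> i hi; rewrite /d2 ifF //; lia.
Qed.

Theorem proposition4p3 (F : fieldType) (n k l : nat) :
  (1 < k)%N -> (k < n)%N -> (0 < l)%N -> (l < 2 ^ (n - k))%N ->
  (binary_ones l <= k)%N ->
  exists (mul : 'rV[F]_n -> 'rV[F]_n -> 'rV[F]_n) (one : 'rV[F]_n),
    bilinear_mul mul /\ unital_mul mul one /\ alg_length mul one l.
Proof.
move=> k1 kn l0 lt bo.
case: n kn lt => [|N] kn lt; first by lia.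
have [c [d [c0 cb wl]]] := exists_ops l0 lt.
have cN : c <= N by lia.
exists (@amul F N c d), (ev F N 0).
split; first exact: amul_bil.
split; first exact: amul_unital.
by rewrite -wl; apply: alg_len.
Qed.
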